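(* Let $n\geq1$ and $\eta\in\Omega$. There exists a unique $J_\eta\subset\Lambda_{3,n}$ such that $\{A_n\beta:\beta\in J_\eta\}=T'_\eta$. Moreover, $J_\eta\in S_{A_n}$.
   Context: Notation: for $\beta\in\mathbb N^t$, $|\beta|$ is the coordinate sum, $\gamma\leq\beta$ is coordinatewise, $\binom{\beta}{\gamma}=\prod_i\binom{\beta_i}{\gamma_i}$; $\Lambda_{t,n}=\{\beta\in\mathbb N^t:1\leq|\beta|\leq n\}$, $\lambda_{t,n}=|\Lambda_{t,n}|$; for $v\in\mathbb N^2$, $\bar v=(\binom{v}{\alpha})_{\alpha\in\Lambda_{2,n}}\in\mathbb C^{\lambda_{2,n}}$. $A_n=\begin{pmatrix}1&1&n\\0&1&n+1\end{pmatrix}$. For $\beta\in\Lambda_{3,n}$, $c_\beta=\sum_{\gamma\in\mathbb N^3,\gamma\leq\beta}(-1)^{|\beta-\gamma|}\binom{\beta}{\gamma}\overline{A_n\gamma}$; $S_{A_n}$ is the set of $J\subset\Lambda_{3,n}$ with $|J|=\lambda_{2,n}$ such that the matrix with rows $c_\beta$ ($\beta\in J$) has non-zero determinant. $\Omega$ is the set of sequences $\eta=(z,d_0,\ldots,d_r)$ with $z\in\{0,1\}$, $d_0=0$, $d_i\geq1$ ($1\leq i\leq r$), $\sum d_i=n$. For $j\in\{1,\ldots,n\}$ let $t$ be unique with $\sum_{i=0}^{t-1}d_i<j\leq\sum_{i=0}^td_i$, $c=j-\sum_{i=0}^{t-1}d_i$; $v_{j,\eta}=(\sum_{i\text{ odd},i<t}d_i+c,0)$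 if $z=1,t$ odd; $(0,\sum_{i\text{ even},i<t}d_i+c)$ if $z=1,t$ even; $(0,\sum_{i\text{ odd},i<t}d_i+c)$ if $z=0,t$ odd; $(\sum_{i\text{ even},i<t}d_i+c,0)$ if $z=0,t$ even. $T_{j,\eta}=\{v_{j,\eta}+p(1,1):0\leq p\leq n-j\}$, $T_{0,\eta}=\{(p,p):1\leq p\leq n\}$. Let $r_{j,\eta}=n\cdot\pi_2(v_{j,\eta})$ (second coordinate) and $T'_\eta=T_{0,\eta}\cup\bigcup_{j=1}^n\{v+(r_{j,\eta},r_{j,\eta}):v\in T_{j,\eta}\}$. *)

(* Defs.v *)
From HB Require Import structures.
From mathcomp Require Import all_boot all_order all_algebra algC.
Set Implicit Arguments. Unset Strict Implicit. Unset Printing Implicit Defensive.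
Import Order.TTheory GRing.Theory Num.Theory.

(* Points of N^3 with coordinates <= n : a finite type containing Lambda_{3,n}. *)
Definition T3 (n : nat) := ('I_n.+1 * 'I_n.+1 * 'I_n.+1)%type.
(* Points of N^2 with coordinates <= n : a finite type containing Lambda_{2,n}. *)
Definition T2 (n : nat) := ('I_n.+1 * 'I_n.+1)%type.

Definition nat3 n (b : T3 n) : nat * nat * nat := (b.1.1 : nat, b.1.2 : nat, b.2 : nat).

Definition Lam3 (n : nat) : {set T3 n} :=
  [set b : T3 n | (1 <= b.1.1 + b.1.2 + b.2 <= n)%N].
Definition Lam2 (n : nat) : {set T2 n} :=
  [set a : T2 n | (1 <= a.1 + a.2 <= n)%N].

(* A_n = [[1,1,n],[0,1,n+1]] acting on N^3 *)
Definition An (n : nat) (g : nat * nat * nat) : nat * nat :=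
  (g.1.1 + g.1.2 + n * g.2, g.1.2 + n.+1 * g.2)%N.

(* \bar v evaluated at alpha : binom(v, alpha) = C(v1,a1) C(v2,a2) *)
Definition barv n (v : nat * nat) (a : T2 n) : algC :=
  (('C(v.1, a.1) * 'C(v.2, a.2))%N)%:R%R.

Local Open Scope ring_scope.
Definition cvec (n : nat) (b : nat * nat * nat) (a : T2 n) : algC :=
  \sum_(g1 < b.1.1.+1) \sum_(g2 < b.1.2.+1) \sum_(g3 < b.2.+1)
    ((-1) ^+ (b.1.1 - g1 + (b.1.2 - g2) + (b.2 - g3))%N
    * (('C(b.1.1, g1) * 'C(b.1.2, g2) * 'C(b.2, g3))%N)%:R
    * barv (An n (g1 : nat, g2 : nat, g3 : nat)) a)%R.

(* The lambda_{2,n} x lambda_{2,n} matrix with rows c_beta (beta in J, listed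
   in the order of enum J) and columns indexed by Lambda_{2,n} (in the order of
   enum (Lam2 n)).  Only meaningful when #|J| = #|Lam2 n|; the non-vanishing of
   its determinant does not depend on the chosen orderings. *)
Definition cmat (n : nat) (J : {set T3 n}) : 'M[algC]_(#|Lam2 n|) :=
  \matrix_(i < #|Lam2 n|, k < #|Lam2 n|)
     cvec (nat3 (nth (ord0, ord0, ord0) (enum J) i)) (enum_val k).

Local Close Scope ring_scope.
Definition in_SA (n : nat) (J : {set T3 n}) : Prop :=
  [/\ J \subset Lam3 n, #|J| = #|Lam2 n| & (\det (cmat J) != 0)%R].

(* Omega: eta = (z, d_0, ..., d_r), encoded by z and ds = [:: d_0; ...; d_r]. *)
Definition Omega (n z : nat) (ds : seq nat) : Prop :=
  [/\ (z <= 1)%N, (0 < size ds)%N, nth 0 ds 0 = 0%N,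
      (forall i, (1 <= i < size ds)%N -> (1 <= nth 0 ds i)%N) & sumn ds = n].

Definition psum (ds : seq nat) (t : nat) : nat := (\sum_(i < t) nth 0 ds i)%N.

(* the unique t with psum t < j <= psum (t+1) (taken as the least t with
   j <= psum (t+1)) *)
Definition tidx (ds : seq nat) (j : nat) : nat :=
  find (fun t => (j <= psum ds t.+1)%N) (iota 0 (size ds)).

Definition sodd (ds : seq nat) (t : nat) : nat := (\sum_(i < t | odd i) nth 0 ds i)%N.
Definition seven (ds : seq nat) (t : nat) : nat := (\sum_(i < t | ~~ odd i) nth 0 ds i)%N.

Definition vj (z : nat) (ds : seq nat) (j : nat) : nat * nat :=
  let t := tidx ds j in
  let c := (j - psum ds t)%N in
  if z == 1%N then
    (if odd t then (sodd ds t + c, 0)%N else (0, seven ds t + c)%N)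
  else
    (if odd t then (0, sodd ds t + c)%N else (seven ds t + c, 0)%N).

Definition rj (n z : nat) (ds : seq nat) (j : nat) : nat := (n * (vj z ds j).2)%N.

Definition inTp (n z : nat) (ds : seq nat) (v : nat * nat) : Prop :=
  (exists p, (1 <= p <= n)%N /\ v = (p, p))
  \/ (exists j p, [/\ (1 <= j <= n)%N, (p <= n - j)%N &
        v = ((vj z ds j).1 + p + rj n z ds j, (vj z ds j).2 + p + rj n z ds j)%N]).

Definition image_is_Tp (n z : nat) (ds : seq nat) (J : {set T3 n}) : Prop :=
  forall v : nat * nat, (exists2 b, b \in J & An n (nat3 b) = v) <-> inTp n z ds v.

(* Main.v *)
Require Import Defs.
From mathcomp Require Import all_boot all_order all_algebra algC.
From mathcomp Require Import zify.
Set Implicit Arguments. Unset Strict Implicit. Unset Printing Implicit Defensive.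

Lemma psumS ds t : psum ds t.+1 = psum ds t + nth 0 ds t.
Proof. by rewrite /psum big_ord_recr. Qed.

Lemma psum0 ds : psum ds 0 = 0.
Proof. by rewrite /psum big_ord0. Qed.

Lemma psum_mono ds t t' : t <= t' -> psum ds t <= psum ds t'.
Proof.
move=> le; rewrite -(subnKC le); elim: (t' - t) => [|k IH]; first by rewrite addn0.
by rewrite addnS psumS; lia.
Qed.

Lemma psum_size ds : psum ds (size ds) = sumn ds.
Proof.
rewrite /psum sumnE (big_nth 0) big_mkord.
by [].
Qed.

Lemma psum_big ds t : size ds <= t -> psum ds t = sumn ds.
Proof.
move=> le; rewrite -(subnKC le); elim: (t - size ds) => [|k IH]; first by rewrite addn0 psum_size.
by rewrite addnS psumS IH nth_default ?addn0 //; lia.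
Qed.

Lemma find_iota_eq (a : pred nat) m t :
  t < m -> a t -> (forall t', t' < t -> ~~ a t') -> find a (iota 0 m) = t.
Proof.
move=> tm at_ bef.
have hs : has a (iota 0 m) by apply/hasP; exists t => //; rewrite mem_iota.
have fl : find a (iota 0 m) < m by move: hs; rewrite has_find size_iota.
have := nth_find 0 hs; rewrite nth_iota // add0n => af.
case: (ltngtP (find a (iota 0 m)) t) => // h.
  by have := bef _ h; rewrite af.
have := before_find 0 h; rewrite nth_iota ?at_ //; lia.
Qed.

Lemma tidx_spec n z ds j : Omega n z ds -> j <= n ->
  [/\ tidx ds j < size ds, j <= psum ds (tidx ds j).+1,
      psum ds (tidx ds j) <= j & (0 < j -> psum ds (tidx ds j) < j)].
Proof.
case=> _ s0 d0 dpos sn jn.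
set a : pred nat := fun t => j <= psum ds t.+1.
have hs : has a (iota 0 (size ds)).
  apply/hasP; exists (size ds).-1; first by rewrite mem_iota; lia.
  by rewrite /a prednK // psum_size sn.
have fl : tidx ds j < size ds by move: hs; rewrite has_find size_iota.
have := nth_find 0 hs; rewrite nth_iota // add0n => af.
split => //.
  case e: (tidx ds j) => [|t]; first by rewrite psum0.
  have : t < tidx ds j by rewrite e.
  move/(before_find 0); rewrite nth_iota; last by lia.
  by rewrite /a add0n; lia.
case e: (tidx ds j) => [|t]; first by rewrite psum0.
have : t < tidx ds j by rewrite e.
move/(before_find 0); rewrite nth_iota; last by lia.
by rewrite /a add0n; lia.
Qed.

Lemma tidx_eq n z ds j t : Omega n z ds -> t < size ds -> j <= psum ds t.+1 ->
  (forall t', t' < t -> psum ds t'.+1 < j) -> tidx ds j = t.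
Proof.
move=> _ ts jt bef; rewrite /tidx; apply: find_iota_eq => // t' /bef; lia.
Qed.

Lemma tidx0 n z ds : Omega n z ds -> tidx ds 0 = 0.
Proof. move=> Om; apply: (tidx_eq Om) => //; by case: Om. Qed.

Lemma tidxS n z ds j : Omega n z ds -> j < n ->
  tidx ds j.+1 = if j.+1 <= psum ds (tidx ds j).+1 then tidx ds j else (tidx ds j).+1.
Proof.
move=> Om jn; have [ts jle pl pl'] := tidx_spec Om (ltnW jn).
case: ifP => h.
  apply: (tidx_eq Om) => // t' lt.
  case: (tidx ds j) lt pl pl' => // t lt.
  have := psum_mono ds lt; rewrite /=; lia.
have ej : psum ds (tidx ds j).+1 = j by lia.
case: Om => z1 s0 d0 dpos sn.
have ts1 : (tidx ds j).+1 < size ds.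
  rewrite ltnNge; apply/negP => le; move: ej; rewrite psum_big // sn; lia.
apply: (tidx_eq (And5 z1 s0 d0 dpos sn)) => //.
  rewrite psumS ej; have := dpos (tidx ds j).+1; lia.
move=> t' lt; have := psum_mono ds lt; lia.
Qed.

Lemma count_tidx n z ds j e : Omega n z ds -> j <= n ->
  count (fun j' => odd (tidx ds j') == e) (iota 1 j) =
  (\sum_(i < tidx ds j | odd i == e) nth 0 ds i) +
  (if odd (tidx ds j) == e then j - psum ds (tidx ds j) else 0).
Proof.
move=> Om; elim: j => [|j IH] jn.
  by rewrite (tidx0 Om) big_ord0 psum0 /=; case: ifP.
have jn' : j <= n by lia.
rewrite (_ : iota 1 j.+1 = iota 1 j ++ [:: j.+1]); last by rewrite -[j.+1]addn1 iotaD add1n addn1.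
rewrite count_cat IH // /= addn0.
have [ts jle pl pl'] := tidx_spec Om jn'.
rewrite (tidxS Om jn); case: (leqP j.+1 (psum ds (tidx ds j).+1)) => h.
  case: (odd (tidx ds j) == e); lia.
have ej : psum ds (tidx ds j).+1 = j by lia.
rewrite [X in _ = X + _]big_mkcond /= big_ord_recr /= -big_mkcond /=.
move: ej; rewrite psumS => ej.
clear IH; case: (odd (tidx ds j)) => /=; case: e => /=; lia.
Qed.

Definition cnt (f : nat -> bool) j := count (fun j' => f j' == f j) (iota 1 j).
Definition fo ds j := odd (tidx ds j).

Lemma vj_form n z ds j : Omega n z ds -> j <= n ->
  vj z ds j = if (z == 1) == fo ds j then (cnt (fo ds) j, 0) else (0, cnt (fo ds) j).
Proof.
move=> Om jn; rewrite /cnt /fo (count_tidx _ Om jn) eqxx /vj /sodd /seven.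
case: (z == 1); case o: (odd (tidx ds j)) => /=.
- by congr (_ + _, _); apply: eq_bigl => i; case: (odd i).
- by congr (_, _ + _); apply: eq_bigl => i; case: (odd i).
- by congr (_, _ + _); apply: eq_bigl => i; case: (odd i).
- by congr (_ + _, _); apply: eq_bigl => i; case: (odd i).
Qed.

Lemma cnt_bounds f j : 0 < j -> 0 < cnt f j <= j.
Proof.
move=> j0; apply/andP; split.
  rewrite /cnt -has_count; apply/hasP; exists j => //; rewrite mem_iota; lia.
by rewrite /cnt (leq_trans (count_size _ _)) // size_iota.
Qed.

Lemma iotaS1 j : iota 1 j.+1 = iota 1 j ++ [:: j.+1].
Proof. by rewrite -[j.+1]addn1 iotaD add1n addn1. Qed.

Lemma cnt_mono f j j' : 0 < j -> j < j' -> f j = f j' -> cnt f j < cnt f j'.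
Proof.
move=> j0 jj' fe; rewrite /cnt -fe.
have -> : iota 1 j' = iota 1 j ++ iota (j.+1) (j' - j).
  by rewrite -[in LHS](subnKC (ltnW jj')) iotaD add1n.
rewrite count_cat -[X in X < _]addn0 ltn_add2l -has_count.
apply/hasP; exists j'; last by rewrite fe.
rewrite mem_iota; lia.
Qed.

Lemma cnt_all (f : nat -> bool) (e : bool) a j : 0 < a <= count (fun x => f x == e) (iota 1 j) ->
  exists j', [/\ 0 < j' <= j, f j' = e & count (fun x => f x == e) (iota 1 j') = a].
Proof.
elim: j => [|j IH]; first by rewrite /=; lia.
rewrite iotaS1 count_cat /= addn0.
case: (ltnP a (count (fun x => f x == e) (iota 1 j)).+1) => h.
  move=> ha; case: (IH _) => [|j' [h1 h2 h3]]; first lia.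
  by exists j'; split => //; lia.
case fe: (f j.+1 == e) => /= ha; last lia.
exists j.+1; split; [lia | exact/eqP | ].
by rewrite iotaS1 count_cat /= fe; lia.
Qed.

Lemma cnt0 f : cnt f 0 = 0.
Proof. by []. Qed.

Lemma vj0 n z ds : Omega n z ds -> vj z ds 0 = (0, 0).
Proof. by move=> Om; rewrite (vj_form Om) // cnt0; case: ifP. Qed.

Lemma vj_sum n z ds j : Omega n z ds -> j <= n ->
  [/\ (vj z ds j).1 + (vj z ds j).2 = cnt (fo ds) j,
      (vj z ds j).1 = 0 \/ (vj z ds j).2 = 0,
      cnt (fo ds) j <= j & (0 < j -> 0 < cnt (fo ds) j)].
Proof.
move=> Om jn; rewrite (vj_form Om jn).
have h1 : 0 < j -> 0 < cnt (fo ds) j <= j by move/cnt_bounds.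
have h2 : cnt (fo ds) j <= j.
  case: j {jn} h1 => [|j] h1; first by rewrite cnt0.
  by case/andP: (h1 isT).
split => //; first (by case: ifP => /= _; rewrite ?addn0); first (by case: ifP => /= _; auto).
by move=> /h1 /andP[].
Qed.

Lemma vj_inj n z ds j j' : Omega n z ds -> j <= n -> j' <= n ->
  vj z ds j = vj z ds j' -> j = j'.
Proof.
move=> Om jn jn' e.
have [s1 _ b1 p1] := vj_sum Om jn; have [s2 _ b2 p2] := vj_sum Om jn'.
have ec : cnt (fo ds) j = cnt (fo ds) j' by rewrite -s1 -s2 e.
case: j jn e s1 b1 p1 ec => [|j] jn e s1 b1 p1 ec.
  case: j' jn' e s2 b2 p2 ec => // j' jn' e s2 b2 p2 ec.
  by have := p2 isT; rewrite -ec cnt0.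
case: j' jn' e s2 b2 p2 ec => [|j'] jn' e s2 b2 p2 ec.
  by have := p1 isT; rewrite ec cnt0.
have ef : fo ds j.+1 = fo ds j'.+1.
  move: e; rewrite (vj_form Om jn) (vj_form Om jn').
  have := p1 isT; have := p2 isT.
  case: (z == 1); case: (fo ds j.+1); case: (fo ds j'.+1) => //= c1 c2 [];
  lia.
case: (ltngtP j j') => h; last by rewrite h.
  by have := cnt_mono (ltn0Sn j) (h : j.+1 < j'.+1) ef; rewrite ec ltnn.
by have := cnt_mono (ltn0Sn j') (h : j'.+1 < j.+1) (esym ef); rewrite ec ltnn.
Qed.

Definition fN z ds j p : nat * nat * nat := ((vj z ds j).1, p, (vj z ds j).2).
Definition fT n z ds (x : T2 n) : T3 n :=
  (inord (vj z ds x.1).1, x.2, inord (vj z ds x.1).2).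
Definition Jset n z ds : {set T3 n} := [set fT z ds x | x in Lam2 n].

Lemma nat3_fT n z ds (x : T2 n) : Omega n z ds -> nat3 (fT z ds x) = fN z ds x.1 x.2.
Proof.
move=> Om; have xn : (x.1 : nat) <= n by rewrite -ltnS.
have [s _ b _] := vj_sum Om xn.
rewrite /nat3 /fT /fN /= !inordK //; lia.
Qed.

Lemma An_inj n (b b' : T3 n) : An n (nat3 b) = An n (nat3 b') -> b = b'.
Proof.
case: b => [[b1 b2] b3]; case: b' => [[c1 c2] c3]; rewrite /An /nat3 /= => [[e1 e2]].
have h2 : (b2 : nat) = c2.
  have := f_equal (modn ^~ n.+1) e2.
  by rewrite ![_ + n.+1 * _]addnC ![n.+1 * _]mulnC !modnMDl !modn_small.
have h3 : (b3 : nat) = c3.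
  by move: e2; rewrite h2 => /addnI /eqP; rewrite eqn_mul2l /= => /eqP.
have h1 : (b1 : nat) = c1 by move: e1; rewrite h2 h3; lia.
by congr ((_, _), _); apply: val_inj.
Qed.


Lemma fN_eq z ds j p j' p' : fN z ds j p = fN z ds j' p' -> vj z ds j = vj z ds j' /\ p = p'.
Proof. rewrite /fN. case: (vj z ds j) => a b. case: (vj z ds j') => a' b'. by case=> -> -> ->. Qed.
Lemma fT_inj n z ds : Omega n z ds -> {in Lam2 n &, injective (fT z ds)}.
Proof.
move=> Om x y _ _ e.
have := f_equal (@nat3 n) e.
rewrite (nat3_fT x Om) (nat3_fT y Om) => /fN_eq [e1 e2].
have e12 : x.1 = y.1 :> nat by apply: (vj_inj Om _ _ e1); rewrite -ltnS.
case: x y e12 e2 {e e1} => [x1 x2] [y1 y2] /= e12 e2.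
by congr (_, _); apply: val_inj.
Qed.

Lemma card_J n z ds : Omega n z ds -> #|Jset n z ds| = #|Lam2 n|.
Proof. by move=> Om; rewrite card_in_imset //; apply: fT_inj. Qed.

Lemma J_sub n z ds : Omega n z ds -> Jset n z ds \subset Lam3 n.
Proof.
move=> Om; apply/subsetP => b /imsetP [x xL ->].
have E := nat3_fT x Om.
have E1 : ((fT z ds x).1.1 : nat) = (vj z ds x.1).1 := congr1 (fun t => t.1.1) E.
have E2 : ((fT z ds x).1.2 : nat) = x.2 := congr1 (fun t => t.1.2) E.
have E3 : ((fT z ds x).2 : nat) = (vj z ds x.1).2 := congr1 (fun t => t.2) E.
rewrite inE E1 E2 E3.
move: xL; rewrite inE.
case: x {E E1 E2 E3} => [x1 x2] /=.
have xn : (x1 : nat) <= n by rewrite -ltnS.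
have [s o bnd pos] := vj_sum Om xn.
move: (x2 : nat) => k.
move: (vj z ds x1) s o => [a c] /= s o.
move: (nat_of_ord x1) pos bnd s => [|j] pos bnd s; first by rewrite cnt0 in s; lia.
have := pos isT; lia.
Qed.

Lemma J_image n z ds : Omega n z ds -> image_is_Tp z ds (Jset n z ds).
Proof.
move=> Om v; split.
  case=> b /imsetP [x xL ->] <-; rewrite (nat3_fT x Om) /An /fN /inTp /rj.
  case: x xL => [x1 x2]; rewrite inE => xL; simpl in xL.
  have x1n : (x1 : nat) <= n by rewrite -ltnS.
  have := vj_sum Om x1n.
  move: (nat_of_ord x1) x1n xL => [|j] x1n xL.
    rewrite (vj0 Om) => _; left; exists x2; split; first by [].
    by congr (_, _); rewrite ?muln0 ?addn0.
  move=> [_ _ bnd _]; right; exists j.+1, x2.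
  move: (vj z ds j.+1) bnd => [a c] /= bnd; split; [lia|lia|].
  by congr (_, _); rewrite mulSn; lia.
case.
  move=> [p [hp ->]].
  exists (fT z ds (inord 0, inord p)).
    apply/imsetP; exists (inord 0, inord p) => //; rewrite inE /= !inordK; lia.
  rewrite (nat3_fT _ Om) /An /fN /= !inordK ?(vj0 Om) /=; try lia.
  by congr (_, _); rewrite ?muln0 ?addn0.
move=> [j [p [hj hp ->]]].
exists (fT z ds (inord j, inord p)).
  apply/imsetP; exists (inord j, inord p) => //; rewrite inE /= !inordK; lia.
rewrite (nat3_fT _ Om) /An /fN /rj.
rewrite [(inord j, inord p).1]/= [(inord j, inord p).2]/= !inordK; try lia.
move: (vj z ds j) => [a c] /=; congr (_, _); rewrite mulSn; lia.
Qed.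

Lemma J_unique n z ds (J' : {set T3 n}) : Omega n z ds ->
  image_is_Tp z ds J' -> J' = Jset n z ds.
Proof.
move=> Om hJ'; have hJ := J_image Om.
apply/setP => b; apply/idP/idP => bin.
  have : exists2 b0, b0 \in J' & An n (nat3 b0) = An n (nat3 b) by exists b.
  move/hJ'/hJ => [b' b'in /An_inj e]; by rewrite -e.
have : exists2 b0, b0 \in Jset n z ds & An n (nat3 b0) = An n (nat3 b) by exists b.
move/hJ/hJ' => [b' b'in /An_inj e]; by rewrite -e.
Qed.

Definition Dn n z ds (g : nat * nat * nat) : Prop :=
  g = (0, 0, 0) \/ exists j p, 0 < j + p <= n /\ g = fN z ds j p.

Lemma Dn_closed n z ds b g1 g2 g3 : Omega n z ds -> Dn n z ds b ->
  g1 <= b.1.1 -> g2 <= b.1.2 -> g3 <= b.2 -> Dn n z ds (g1, g2, g3).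
Proof.
move=> Om [-> /= h1 h2 h3|[j [p [hjp ->]]]].
  by left; congr (_, _, _); lia.
have jn : j <= n by lia.
have base : forall q, q <= p -> Dn n z ds (0, q, 0).
  move=> q qp; case: q qp => [|q] qp; first by left.
  right; exists 0, q.+1; split; first lia.
  by rewrite /fN (vj0 Om).
rewrite /fN; move: (vj_form Om jn).
case: j jn hjp => [|j] jn hjp.
  rewrite (vj0 Om) => _ /= h1 h2 h3.
  have -> : g1 = 0 by lia.
  have -> : g3 = 0 by lia.
  exact: base.
have cpos : 0 < cnt (fo ds) j.+1 <= j.+1 by apply: cnt_bounds.
have side : forall j', 0 < j' <= j.+1 -> fo ds j' = fo ds j.+1 -> 
   count (fun x => fo ds x == fo ds j.+1) (iota 1 j') = cnt (fo ds) j' /\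
   vj z ds j' = if (z == 1) == fo ds j.+1 then (cnt (fo ds) j', 0) else (0, cnt (fo ds) j').
  move=> j' hj' ef; split; first by rewrite /cnt ef.
  by rewrite (vj_form Om) ?ef //; lia.
case: ifP => sd -> /= h1 h2 h3.
  have -> : g3 = 0 by lia.
  case: g1 h1 => [|g1] h1; first by apply: base.
  have hc : 0 < g1.+1 <= count (fun x => fo ds x == fo ds j.+1) (iota 1 j.+1) by exact: h1.
  have [j' [hj' ef ec]] := cnt_all hc.
  have [ec' ev] := side j' hj' ef.
  right; exists j', g2; split; first lia.
  by rewrite /fN ev sd -ec' ec.
have -> : g1 = 0 by lia.
case: g3 h3 => [|g3] h3; first by apply: base.
have hc : 0 < g3.+1 <= count (fun x => fo ds x == fo ds j.+1) (iota 1 j.+1) by exact: h3.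
have [j' [hj' ef ec]] := cnt_all hc.
have [ec' ev] := side j' hj' ef.
right; exists j', g2; split; first lia.
by rewrite /fN ev sd -ec' ec.
Qed.

Import GRing.Theory Num.Theory.

Definition tdeg (n : nat) (Q : {poly {poly algC}}) := forall k : nat, (size (Q`_k)%R <= n.+1 - k)%N.

Lemma size_big_le (I : Type) (r : seq I) (P : pred I) (F : I -> {poly algC}) B :
  (forall i, P i -> size (F i) <= B)%N -> (size (\sum_(i <- r | P i) F i)%R <= B)%N.
Proof.
move=> h; elim/big_ind: _ => //; first by rewrite size_poly0.
by move=> x y hx hy; rewrite (leq_trans (size_polyD _ _)) // geq_max hx hy.
Qed.

Lemma tdeg_le m n Q : (m <= n)%N -> tdeg m Q -> tdeg n Q.
Proof. move=> le h k; apply: (leq_trans (h k)); lia. Qed.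

Lemma tdeg0 n : tdeg n 0%R.
Proof. by move=> k; rewrite coef0 size_poly0. Qed.

Lemma tdegD n P Q : tdeg n P -> tdeg n Q -> tdeg n (P + Q)%R.
Proof.
move=> hP hQ k; rewrite coefD; apply: (leq_trans (size_polyD _ _)); by rewrite geq_max hP hQ.
Qed.

Lemma tdeg_sum n (I : Type) (r : seq I) (F : I -> {poly {poly algC}}) :
  (forall i, tdeg n (F i)) -> tdeg n (\sum_(i <- r) F i)%R.
Proof.
move=> h; elim/big_ind: _ => //; first exact: tdeg0.
by move=> x y; apply: tdegD.
Qed.

Lemma tdegM m l P Q : tdeg m P -> tdeg l Q -> tdeg (m + l) (P * Q)%R.
Proof.
move=> hP hQ k; rewrite coefM; apply: size_big_le => -[j /= jk] _.
have [->|nP] := eqVneq (P`_j)%R 0%R; first by rewrite mul0r size_poly0.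
have [->|nQ] := eqVneq (Q`_(k - j))%R 0%R; first by rewrite mulr0 size_poly0.
have sP := hP j; have sQ := hQ (k - j)%N.
have sP1 : (0 < size (P`_j)%R)%N by rewrite size_poly_gt0.
have sQ1 : (0 < size (Q`_(k - j))%R)%N by rewrite size_poly_gt0.
apply: (leq_trans (size_polyMleq _ _)).
move: sP sP1 sQ sQ1; set a := size _; set b := size _; move=> sP sP1 sQ sQ1; lia.
Qed.

Lemma tdegC0 (c : algC) : tdeg 0 (c%:P%:P)%R.
Proof.
move=> [|k]; rewrite coefC /=; first by rewrite size_polyC; case: (c != 0)%R.
by rewrite size_poly0.
Qed.

Lemma tdegXC (q : {poly algC}) : (size q <= 2)%N -> tdeg 1 ('X + q%:P)%R.
Proof.
move=> hq [|[|k]]; rewrite coefD coefX coefC /=.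
- by rewrite add0r.
- by rewrite addr0 size_poly1.
- by rewrite addr0 size_poly0.
Qed.

Lemma tdeg_prod (F : nat -> {poly {poly algC}}) a :
  (forall i, tdeg 1 (F i)) -> tdeg a (\prod_(i < a) F i)%R.
Proof.
move=> h; elim: a => [|a IH]; first by rewrite big_ord0 -polyC1 -polyC1; apply: tdegC0.
rewrite big_ord_recr /= -addn1; exact: tdegM.
Qed.

Definition ev (c y : algC) (Q : {poly {poly algC}}) : algC := ((Q.[y%:P]).[c])%R.

Lemma ev_map c y Q : ev c y Q = ((map_poly (horner_eval c) Q).[y])%R.
Proof.
by rewrite /ev -[X in _ = (_.[X])%R](hornerC y c) horner_map.
Qed.

Lemma poly_zero_roots (p : {poly algC}) (rs : seq algC) :
  all (root p) rs -> uniq rs -> (size p <= size rs)%N -> p = 0%R.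
Proof.
move=> ha hu hs; apply/eqP; apply: contraTT hs => nz.
by rewrite -ltnNge; apply: max_poly_roots.
Qed.

Lemma line n (Q : {poly {poly algC}}) (c : nat -> algC) (Y : nat -> nat -> algC) :
  tdeg n Q ->
  (forall i j, (i <= n)%N -> (j <= n)%N -> c i = c j -> i = j) ->
  (forall j p p', (j <= n)%N -> (p <= n - j)%N -> (p' <= n - j)%N -> Y j p = Y j p' -> p = p') ->
  (forall j p, (j <= n)%N -> (p <= n - j)%N -> ev (c j) (Y j p) Q = 0%R) ->
  Q = 0%R.
Proof.
move=> hdeg cinj Yinj hev.
have rootsc : forall j, (j <= n.+1)%N -> uniq [seq c i | i <- iota 0 j].
  move=> j jn; rewrite map_inj_in_uniq ?iota_uniq // => a b.
  rewrite !mem_iota !add0n => ha hb; apply: cinj; lia.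
have P : forall j, (j <= n.+1)%N -> forall i k, (i < j)%N -> ((Q`_k).[c i])%R = 0%R.
  elim=> [|j IH] jn i k //.
  have IH' := IH (ltnW jn).
  have allr : forall k, all (root (Q`_k)%R) [seq c i | i <- iota 0 j].
    move=> k'; apply/allP => x /mapP [i' hi' ->]; apply/eqP/IH'.
    by move: hi'; rewrite mem_iota; lia.
  have hk : forall k, (n - j < k)%N -> (Q`_k)%R = 0%R.
    move=> k' hk'; apply: (poly_zero_roots (allr k')); first by apply: (rootsc j (ltnW jn)).
    by rewrite size_map size_iota (leq_trans (hdeg k')) //; lia.
  set Qc := map_poly (horner_eval (c j)) Q.
  have cQc : forall k, (Qc`_k)%R = ((Q`_k).[c j])%R.
    by move=> k'; rewrite coef_map_id0 // horner_evalE horner0.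
  have Qc0 : Qc = 0%R.
    apply: (poly_zero_roots (rs := [seq Y j p | p <- iota 0 (n - j).+1])).
    - apply/allP => x /mapP [p hp ->]; move: hp; rewrite mem_iota => hp.
      rewrite /root -ev_map hev; [by [] | lia | lia].
    - rewrite map_inj_in_uniq ?iota_uniq // => a b.
      rewrite !mem_iota !add0n => ha hb; apply: Yinj; lia.
    rewrite size_map size_iota; apply/leq_sizeP => k' hk'.
    by rewrite cQc hk ?horner0 //; lia.
  move=> hi; have [hij|hji|eij] := ltngtP i j; first by apply: IH'.
    lia.
  by rewrite eij -cQc Qc0 coef0.
apply/polyP => k; rewrite coef0.
apply: (poly_zero_roots (rs := [seq c i | i <- iota 0 n.+1])).
- apply/allP => x /mapP [i hi ->]; apply/eqP; apply: (P n.+1) => //.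
  by move: hi; rewrite mem_iota.
- by apply: (rootsc n.+1 (leqnn _)).
by rewrite size_map size_iota (leq_trans (hdeg k)) //; lia.
Qed.

Local Open Scope ring_scope.

Definition Bin (x : algC) (a : nat) : algC := (\prod_(i < a) (x - i%:R))%R.

Lemma Bin_nat (m a : nat) : Bin m%:R a = ('C(m, a) * a`!)%:R%R.
Proof.
rewrite /Bin bin_ffact; elim: a => [|a IH]; first by rewrite big_ord0 ffactn0.
rewrite big_ord_recr /= IH ffactnSr natrM.
case: (leqP a m) => h; first by rewrite natrB.
have -> : m ^_ a = 0%N by rewrite ffact_small.
by rewrite !mul0r.
Qed.

Definition Bpoly (a b : nat) : {poly {poly algC}} :=
  ((\prod_(i < a) ('X + ('X - (i%:R)%:P)%:P)) * (\prod_(i < b) ('X + (- (i%:R)%:P)%:P)))%R.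

Lemma tdeg_Bpoly a b : tdeg (a + b) (Bpoly a b).
Proof.
have h1 : tdeg a (\prod_(i < a) ('X + ('X - (i%:R)%:P)%:P)).
  apply: (@tdeg_prod (fun i : nat => 'X + ('X - (i%:R)%:P)%:P)) => i; apply: tdegXC.
  by rewrite size_XsubC.
have h2 : tdeg b (\prod_(i < b) ('X + (- (i%:R)%:P)%:P)).
  apply: (@tdeg_prod (fun i : nat => 'X + (- (i%:R)%:P)%:P)) => i; apply: tdegXC.
  by rewrite size_polyN (leq_trans (size_polyC_leq1 _)).
exact: tdegM h1 h2.
Qed.

Lemma evM c y P Q : ev c y (P * Q)%R = (ev c y P * ev c y Q)%R.
Proof. by rewrite /ev !hornerM. Qed.

Lemma evD c y P Q : ev c y (P + Q)%R = (ev c y P + ev c y Q)%R.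
Proof. by rewrite /ev !hornerD. Qed.

Lemma ev_sum c y (I : Type) (r : seq I) (F : I -> {poly {poly algC}}) :
  ev c y (\sum_(i <- r) F i)%R = (\sum_(i <- r) ev c y (F i))%R.
Proof. by rewrite /ev !horner_sum. Qed.

Lemma evC c y (x : algC) : ev c y (x%:P%:P) = x.
Proof. by rewrite /ev !hornerC. Qed.

Lemma ev_Bpoly c y a b : ev c y (Bpoly a b) = (Bin (c + y) a * Bin y b)%R.
Proof.
rewrite /Bpoly /ev hornerM !horner_prod hornerM !horner_prod /Bin.
congr (_ * _)%R; apply: eq_bigr => i _.
  by rewrite hornerD hornerX hornerC hornerD hornerC hornerD hornerX hornerN hornerC addrA [(y + c)%R]addrC.
by rewrite hornerD hornerX hornerC hornerD hornerC hornerN hornerC.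
Qed.

Lemma tri n (w : 'I_#|Lam2 n| -> algC) :
  (forall u v : nat, \sum_k w k * barv (u, v) (enum_val k) = 0) -> forall k, w k = 0.
Proof.
move=> h.
suff H : forall N (k : 'I_#|Lam2 n|), ((enum_val k).1 + (enum_val k).2 < N)%N -> w k = 0.
  by move=> k; apply: (H _ k (ltnSn _)).
elim=> [|N IH] k //= hk.
have := h (enum_val k).1 (enum_val k).2.
rewrite (bigD1 k) //= /barv /= !binn muln1 mulr1 big1 ?addr0 // => k' nk.
case: (leqP (enum_val k').1 (enum_val k).1) => h1; last by rewrite (bin_small h1) mul0n mulr0.
case: (leqP (enum_val k').2 (enum_val k).2) => h2; last by rewrite (bin_small h2) muln0 mulr0.
have ne : enum_val k' != enum_val k.
  by apply: contra nk => /eqP /enum_val_inj ->.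
rewrite IH ?mul0r //.
move: ne h1 h2 hk; case: (enum_val k') => a b; case: (enum_val k) => a' b' /= ne h1 h2 hk.
have : (a : nat) != a' \/ (b : nat) != b'.
  case: (eqVneq (a : nat) a') => ea; last by left.
  case: (eqVneq (b : nat) b') => eb; last by right.
  by move: ne; rewrite (val_inj ea) (val_inj eb) eqxx.
case=> /eqP; lia.
Qed.


Definition G n (w : 'I_#|Lam2 n| -> algC) (g : nat * nat * nat) : algC :=
  \sum_k w k * barv (An n g) (enum_val k).

Definition term n (w : 'I_#|Lam2 n| -> algC) (b : nat * nat * nat) (g1 g2 g3 : nat) : algC :=
  (-1) ^+ (b.1.1 - g1 + (b.1.2 - g2) + (b.2 - g3))%N
    * (('C(b.1.1, g1) * 'C(b.1.2, g2) * 'C(b.2, g3))%N)%:R * G w (g1, g2, g3).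

Lemma cvec_G n (w : 'I_#|Lam2 n| -> algC) b :
  \sum_k w k * cvec b (enum_val k) =
  \sum_(g1 < b.1.1.+1) \sum_(g2 < b.1.2.+1) \sum_(g3 < b.2.+1) term w b g1 g2 g3.
Proof.
rewrite /term /G /cvec.
transitivity (\sum_k \sum_(g1 < b.1.1.+1) \sum_(g2 < b.1.2.+1) \sum_(g3 < b.2.+1)
   w k * ((-1) ^+ (b.1.1 - g1 + (b.1.2 - g2) + (b.2 - g3))%N *
              (('C(b.1.1, g1) * 'C(b.1.2, g2) * 'C(b.2, g3))%N)%:R *
              barv (An n (g1 : nat, g2 : nat, g3 : nat)) (enum_val k))).
  apply: eq_bigr => k _; rewrite big_distrr; apply: eq_bigr => g1 _.
  rewrite big_distrr; apply: eq_bigr => g2 _; by rewrite big_distrr.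
rewrite exchange_big; apply: eq_bigr => g1 _.
rewrite exchange_big; apply: eq_bigr => g2 _.
rewrite exchange_big; apply: eq_bigr => g3 _.
rewrite big_distrr; apply: eq_bigr => k _.
by rewrite mulrCA.
Qed.

Lemma sum1_single (b : nat) (F : nat -> algC) :
  (forall g, (g < b)%N -> F g = 0) -> \sum_(g < b.+1) F g = F b.
Proof.
move=> h; rewrite big_ord_recr /= big1 ?add0r // => i _; exact: h.
Qed.

Lemma sum3_single (b1 b2 b3 : nat) (F : nat -> nat -> nat -> algC) :
  (forall g1 g2 g3, (g1 <= b1)%N -> (g2 <= b2)%N -> (g3 <= b3)%N ->
     (g1 + g2 + g3 < b1 + b2 + b3)%N -> F g1 g2 g3 = 0) ->
  \sum_(g1 < b1.+1) \sum_(g2 < b2.+1) \sum_(g3 < b3.+1) F g1 g2 g3 = F b1 b2 b3.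
Proof.
move=> h.
rewrite (sum1_single (F := fun g1 => \sum_(g2 < b2.+1) \sum_(g3 < b3.+1) F g1 g2 g3)).
  rewrite (sum1_single (F := fun g2 => \sum_(g3 < b3.+1) F b1 g2 g3)).
    by rewrite (sum1_single (F := fun g3 => F b1 b2 g3)) // => g3 hg; apply: h => //; lia.
  move=> g2 hg; apply: big1 => g3 _; apply: h; by have := ltn_ord g3; lia.
move=> g1 hg; apply: big1 => g2 _; apply: big1 => g3 _.
by apply: h; have := ltn_ord g2; have := ltn_ord g3; lia.
Qed.

Lemma Dn_J n z ds g : Omega n z ds -> Dn n z ds g -> g <> (0, 0, 0)%N ->
  exists2 b, b \in Jset n z ds & nat3 b = g.
Proof.
move=> Om [->//|[j [p [hjp ->]]]] _.
exists (fT z ds (inord j, inord p)).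
  apply/imsetP; exists (inord j, inord p) => //; rewrite inE /= !inordK; lia.
rewrite (nat3_fT _ Om).
by rewrite [(inord j, inord p).1]/= [(inord j, inord p).2]/= !inordK //; lia.
Qed.

Lemma G0 n (w : 'I_#|Lam2 n| -> algC) : G w (0, 0, 0)%N = 0.
Proof.
rewrite /G big1 // => k _; rewrite /barv /An /= !muln0 !addn0 !bin0n.
have := enum_valP k; rewrite inE; case: (enum_val k) => a b /=.
case: (nat_of_ord a) => [|a'] //; case: (nat_of_ord b) => [|b'] //.
all: by rewrite /= ?muln0 ?mul0n mulr0.
Qed.

Lemma G_vanish n z ds (w : 'I_#|Lam2 n| -> algC) : Omega n z ds ->
  (forall b, b \in Jset n z ds -> \sum_k w k * cvec (nat3 b) (enum_val k) = 0) ->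
  forall g, Dn n z ds g -> G w g = 0.
Proof.
move=> Om hrow.
suff H : forall N g1 g2 g3, Dn n z ds (g1, g2, g3) -> (g1 + g2 + g3 < N)%N -> G w (g1, g2, g3) = 0.
  by move=> [[g1 g2] g3] Dg; apply: (H _ _ _ _ Dg (ltnSn _)).
elim=> [|N IH] g1 g2 g3 Dg hN //.
have [e0|ne0] := eqVneq (g1, g2, g3) (0, 0, 0)%N.
  by rewrite e0 G0.
have ne : (g1, g2, g3) <> (0, 0, 0)%N by apply/eqP.
have [b bJ eb] := Dn_J Om Dg ne.
have := hrow b bJ; rewrite eb cvec_G /= sum3_single.
  by rewrite /term /= !subnn !binn /= expr0 !mul1r.
move=> h1 h2 h3 l1 l2 l3 lt; rewrite /term IH ?mulr0 //.
  exact: (Dn_closed Om Dg).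
lia.
Qed.

From mathcomp Require Import ring.

Definition Qp n (w : 'I_#|Lam2 n| -> algC) : {poly {poly algC}} :=
  \sum_k (w k / (((enum_val k).1)`! * ((enum_val k).2)`!)%:R)%:P%:P
          * Bpoly (enum_val k).1 (enum_val k).2.

Lemma evQ n (w : 'I_#|Lam2 n| -> algC) (u v : nat) :
  ev (u%:R - v%:R) v%:R (Qp w) = \sum_k w k * barv (u, v) (enum_val k).
Proof.
rewrite /Qp ev_sum; apply: eq_bigr => k _.
rewrite evM evC ev_Bpoly subrK !Bin_nat /barv /=.
move: (enum_val k) => [a b] /=.
have A0 : ((a`!)%:R : algC) != 0 by rewrite pnatr_eq0 -lt0n fact_gt0.
have B0 : ((b`!)%:R : algC) != 0 by rewrite pnatr_eq0 -lt0n fact_gt0.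
rewrite !natrM; field.
by rewrite A0 B0.
Qed.

Lemma tdeg_Qp n (w : 'I_#|Lam2 n| -> algC) : tdeg n (Qp w).
Proof.
apply: tdeg_sum => k.
have hk : ((enum_val k).1 + (enum_val k).2 <= n)%N.
  by have := enum_valP k; rewrite inE => /andP[].
have := tdegM (tdegC0 (w k / (((enum_val k).1)`! * ((enum_val k).2)`!)%:R))
  (tdeg_le hk (tdeg_Bpoly (enum_val k).1 (enum_val k).2)).
by rewrite add0n.
Qed.

Lemma c_inj n z ds i j : Omega n z ds -> (i <= n)%N -> (j <= n)%N ->
  ((vj z ds i).1)%:R - ((vj z ds i).2)%:R = ((vj z ds j).1)%:R - ((vj z ds j).2)%:R :> algC ->
  i = j.
Proof.
move=> Om hi hj e; apply: (vj_inj Om hi hj).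
have [_ o1 _ _] := vj_sum Om hi; have [_ o2 _ _] := vj_sum Om hj.
move: e o1 o2; case: (vj z ds i) => a b; case: (vj z ds j) => a' b' /= e o1 o2.
have e' : (a + b')%:R = (a' + b)%:R :> algC.
  rewrite !natrD; apply/eqP; rewrite -subr_eq0; apply/eqP.
  transitivity ((a%:R - b%:R) - (a'%:R - b'%:R) : algC); first ring.
  by rewrite e subrr.
move/eqP: e'; rewrite eqr_nat => /eqP e''.
congr (_, _); lia.
Qed.

Lemma det_ne0 n z ds : Omega n z ds -> \det (cmat (Jset n z ds)) != 0.
Proof.
move=> Om; rewrite -det_tr; apply/negP => /det0P [v vnz hv].
pose w := fun k => v ord0 k.
have hrow : forall b, b \in Jset n z ds -> \sum_k w k * cvec (nat3 b) (enum_val k) = 0.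
  move=> b bJ.
  have ilt : (index b (enum (Jset n z ds)) < #|Lam2 n|)%N.
    by rewrite -(card_J Om) cardE index_mem mem_enum.
  have := congr1 (fun M : 'rV[algC]_#|Lam2 n| => M ord0 (Ordinal ilt)) hv; rewrite !mxE => e.
  rewrite -[X in _ = X]e.
  by apply: eq_bigr => k _; rewrite !mxE /= nth_index ?mem_enum.
have GV := G_vanish Om hrow.
have Q0 : Qp w = 0.
  apply: (line (c := fun j => ((vj z ds j).1)%:R - ((vj z ds j).2)%:R)
               (Y := fun j p => (p + n.+1 * (vj z ds j).2)%:R) (tdeg_Qp w)).
  - by move=> i j hi hj; apply: (c_inj Om hi hj).
  - by move=> j p p' _ _ _ /eqP; rewrite eqr_nat => /eqP /addIn.
  move=> j p hj hp.
  have Dg : Dn n z ds (fN z ds j p).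
    case: (posnP (j + p)) => h.
      have -> : j = 0%N by lia.
      have -> : p = 0%N by lia.
      by left; rewrite /fN (vj0 Om).
    right; exists j, p; split => //; lia.
  have := GV _ Dg; rewrite /G /An /fN.
  move: (vj z ds j) => [a c] /=.
  have -> : a%:R - c%:R = (a + p + n * c)%:R - (p + n.+1 * c)%:R :> algC.
    by rewrite -[n.+1]addn1 !natrD !natrM natrD; ring.
  by rewrite evQ.
have w0 : forall k, w k = 0.
  by apply: tri => u v'; rewrite -evQ Q0 /ev !horner0.
move/eqP: vnz; apply; apply/rowP => k; rewrite mxE.
by have := w0 k; rewrite /w (ord1 ord0).
Qed.


Local Close Scope ring_scope.

Theorem proposition3p4 (n z : nat) (ds : seq nat) :
  (1 <= n)%N -> Omega n z ds ->
  exists J : {set T3 n},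
    [/\ J \subset Lam3 n, image_is_Tp z ds J,
        (forall J' : {set T3 n}, J' \subset Lam3 n -> image_is_Tp z ds J' -> J' = J)
      & in_SA J].
Proof.
move=> n1 Om.
exists (Jset n z ds); split.
- exact: J_sub Om.
- exact: J_image Om.
- by move=> J' _ hJ'; exact: J_unique Om hJ'.
- split; [exact: J_sub Om | exact: card_J Om | exact: det_ne0 Om].
Qed.
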